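(* There is an absolute constant $\kappa>0$ such that for all positive integers $c$ and $n$, every collection $\mathcal{D}$ of $n$ distinct unit disks in the plane in which at most $c$ disks have a point in common admits a stacking order $f$ with $$\mathrm{vis}(\mathcal{D},f)\ge \kappa\, \frac{v(c)\, n}{c}.$$ Moreover, this bound is asymptotically tight in the worst case: there is an absolute constant $K>0$ such that for all positive integers $c$ and $m$ there is a collection $\mathcal{D}$ of $n=mc$ distinct unit disks, at most $c$ of which have a point in common, such that $\mathrm{vis}(\mathcal{D},f)\le K\, v(c)\, n/c$ for every stacking order $f$ of $\mathcal{D}$.
   Context: A unit disk is a closed disk of radius $1$ in the plane. A stacking order of a finite collection $\mathcal{D}$ of $n$ distinct unit disks is a bijection $f:\mathcal{D}\to\{1,\dots,n\}$; $f(D)$ is regarded as the height of $D$, and the arrangement is viewed from below. A point $x$ on the boundary circle of $D\in\mathcal{D}$ is visible if $x$ does not lie in any disk $D'\in\mathcal{D}$ with $f(D')<f(D)$. The visible perimeter $\mathrm{vis}(\mathcal{D},f)$ is the total length of all visible boundary points, summed over all disks of $\mathcal{D}$. For a positive integer $k$, $v(k)=\inf_{|\mathcal{D}|=k}\max_f \mathrm{vis}(\mathcal{D},f)$, the infimum over all collections $\mathcal{D}$ of $k$ distinct unit disks in the plane and the maximum over all stacking orders $f$ of $\mathcal{D}$. *)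

(* Defs.v *)
From HB Require Import structures.
From mathcomp Require Import all_boot all_order all_algebra all_fingroup.
From mathcomp Require Import all_classical all_reals all_analysis.
From mathcomp Require Import Rstruct.
Set Implicit Arguments. Unset Strict Implicit. Unset Printing Implicit Defensive.
Import Order.TTheory GRing.Theory Num.Theory.
Local Open Scope classical_set_scope.
Local Open Scope ring_scope.

Notation Reals_R := Rdefinitions.R.

(* A point of the plane. A unit disk is represented by its center. *)
Definition Pt := (Reals_R * Reals_R)%type.

Definition in_udisk (p x : Pt) : Prop :=
  (x.1 - p.1) ^+ 2 + (x.2 - p.2) ^+ 2 <= 1.

Definition circ_pt (p : Pt) (t : Reals_R) : Pt := (p.1 + cos t, p.2 + sin t).

(* A collection of n distinct unit disks: injective C : 'I_n -> Pt (centers).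
   A stacking order: a bijection 'I_n -> 'I_n, i.e. f : {perm 'I_n}
   (heights 0..n-1 instead of 1..n; only the relative order matters). *)

Definition visible_angles n (C : 'I_n -> Pt) (f : {perm 'I_n}) (i : 'I_n)
  : set Reals_R :=
  [set t | 0 <= t < 2 * pi /\
           forall j : 'I_n, (f j < f i)%N -> ~ in_udisk (C j) (circ_pt (C i) t)].

(* visible perimeter: arc length (Lebesgue measure of angle set, unit radius) *)
Definition vis n (C : 'I_n -> Pt) (f : {perm 'I_n}) : Reals_R :=
  \sum_(i < n) fine (@lebesgue_measure Reals_R (visible_angles C f i)).

(* max over stacking orders (vis >= 0, so 0 is a harmless neutral element) *)
Definition maxvis n (C : 'I_n -> Pt) : Reals_R :=
  \big[Num.max/0]_(f : {perm 'I_n}) vis C f.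

Definition v (k : nat) : Reals_R :=
  inf [set maxvis C | C in [set C : 'I_k -> Pt | injective C]].

Definition depth_le n (C : 'I_n -> Pt) (c : nat) : Prop :=
  forall x : Pt, (#|[set i : 'I_n | `[< in_udisk (C i) x >]]| <= c)%N.

(* Main.v *)
Require Import Defs.
From mathcomp Require Import all_boot all_order all_algebra all_fingroup.
From mathcomp Require Import all_classical all_reals all_analysis.
From mathcomp Require Import Rstruct.
From mathcomp Require Import ring lra zify.
Set Implicit Arguments. Unset Strict Implicit. Unset Printing Implicit Defensive.
Import Order.TTheory GRing.Theory Num.Theory.
Local Open Scope ring_scope.
Notation fsubsetP := fintype.subsetP.

Local Open Scope classical_set_scope.

Definition mu (A : set Reals_R) : Reals_R := fine (@lebesgue_measure Reals_R A).

Lemma lm_mono (A B : set Reals_R) : A `<=` B ->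
  (@lebesgue_measure Reals_R A <= lebesgue_measure B)%E.
Proof.
move=> AB; rewrite /lebesgue_measure /lebesgue_stieltjes_measure /measure_extension.
exact: le_outer_measure.
Qed.

Lemma lm_ge0 (A : set Reals_R) : (0 <= @lebesgue_measure Reals_R A)%E.
Proof. exact: measure_ge0. Qed.

Definition I2pi : set Reals_R := `[0, 2 * pi[.

Lemma lm_I2pi : @lebesgue_measure Reals_R I2pi = (2 * pi)%:E.
Proof.
rewrite /I2pi lebesgue_measure_itv /= ifT; last first.
  by rewrite lte_fin; apply: mulr_gt0 => //; exact: pi_gt0.
by rewrite sube0.
Qed.

Lemma mu_ge0 A : 0 <= mu A.
Proof. exact/fine_ge0/lm_ge0. Qed.

Lemma lm_fin A : A `<=` I2pi -> @lebesgue_measure Reals_R A \is a fin_num.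
Proof.
move=> AI; rewrite ge0_fin_numE ?lm_ge0 //.
by apply: (le_lt_trans (lm_mono AI)); rewrite lm_I2pi ltry.
Qed.

Lemma mu_mono A B : A `<=` B -> B `<=` I2pi -> mu A <= mu B.
Proof.
move=> AB BI; rewrite /mu; apply: fine_le; try apply: lm_fin => //.
  exact: subset_trans BI.
exact: lm_mono.
Qed.

Lemma mu_I2pi : mu I2pi = 2 * pi.
Proof. by rewrite /mu lm_I2pi. Qed.

Lemma va_sub n (C : 'I_n -> Pt) f i : visible_angles C f i `<=` I2pi.
Proof. by move=> t [/andP[h1 h2] _]; rewrite /I2pi /= in_itv /= h1 h2. Qed.

Lemma vis_ge0 n (C : 'I_n -> Pt) f : 0 <= vis C f.
Proof. by apply: sumr_ge0 => i _; exact: mu_ge0. Qed.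

Lemma vis_ge2pi n (C : 'I_n -> Pt) f : (0 < n)%N -> 2 * pi <= vis C f.
Proof.
move=> n0; pose i0 := (f^-1)%g (Ordinal n0).
have fi0 : f i0 = Ordinal n0 by rewrite /i0 permKV.
rewrite /vis (bigD1 i0) //= -[X in X <= _]addr0; apply: lerD.
  rewrite -mu_I2pi; have -> // : visible_angles C f i0 = I2pi.
  apply/seteqP; split; first exact: va_sub.
  move=> t It; split; first by move: It; rewrite /I2pi /= in_itv.
  by move=> j; rewrite fi0.
by apply: sumr_ge0 => i _; exact: mu_ge0.
Qed.

Lemma maxvis_ge n (C : 'I_n -> Pt) f : vis C f <= maxvis C.
Proof. exact: le_bigmax. Qed.

Lemma maxvis_attained n (C : 'I_n -> Pt) : exists f, maxvis C <= vis C f.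
Proof.
rewrite /maxvis (bigmax_eq_arg 0 (1%g : {perm 'I_n})) //.
  by eexists; exact: lexx.
by move=> f _; exact: vis_ge0.
Qed.
Section Rank.
Variables (n : nat) (key : 'I_n -> nat).
Hypothesis key_inj : injective key.
Let A i : {set 'I_n} := [set j | (key j < key i)%N]%SET.
Lemma rk_lt i : (#|A i| < n)%N.
Proof.
have : A i \subset [set~ i]%SET.
  by apply/fsubsetP=> j; rewrite !inE; apply: contraTneq => ->; rewrite ltnn.
move/subset_leq_card; rewrite cardsC1 card_ord.
move=> h; apply: (leq_ltn_trans h); rewrite ltn_predL; exact: (leq_ltn_trans (leq0n _) (ltn_ord i)).
Qed.
Definition rkf i : 'I_n := Ordinal (rk_lt i).
Lemma rk_mono i j : (key j < key i)%N -> (#|A j| < #|A i|)%N.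
Proof.
move=> ji; apply: proper_card; apply/properP; split.
  by apply/fsubsetP=> x; rewrite !inE => /ltn_trans; apply.
by exists j; rewrite !inE ?ji ?ltnn.
Qed.
Lemma rk_inj : injective rkf.
Proof.
move=> i j /(congr1 val) /= e; apply: key_inj.
case: (ltngtP (key i) (key j)) => // h.
  by move: (rk_mono h); rewrite e ltnn.
by move: (rk_mono h); rewrite e ltnn.
Qed.
Lemma rank_perm : exists F : {perm 'I_n}, forall i j, (F j < F i)%N = (key j < key i)%N.
Proof.
exists (perm rk_inj) => i j; rewrite !permE /=.
case: (ltnP (key j) (key i)) => h; first exact: rk_mono.
apply/negbTE; rewrite -leqNgt; apply: subset_leq_card.
by apply/fsubsetP=> x; rewrite !inE => /leq_trans; apply.
Qed.
End Rank.

Local Close Scope classical_set_scope.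

Definition Vset k := [set maxvis C | C in [set C : 'I_k -> Pt | injective C]]%classic.

Lemma Vset_lb k : has_lbound (Vset k).
Proof. by exists 0 => _ [C _ <-]; rewrite /maxvis; apply: le_trans (maxvis_ge C 1%g); exact: vis_ge0. Qed.

Lemma v_le k (C : 'I_k -> Pt) : injective C -> v k <= maxvis C.
Proof. by move=> iC; apply: (ge_inf (Vset_lb k)); exists C. Qed.

Lemma Vset_ne k : (Vset k !=set0)%classic.
Proof.
exists (maxvis (fun l : 'I_k => ((l : nat)%:R, 0) : Pt)).
exists (fun l : 'I_k => ((l : nat)%:R, 0) : Pt) => //.
by move=> a b [] /eqP; rewrite eqr_nat => /eqP /val_inj.
Qed.

Lemma v_ge2pi k : (0 < k)%N -> 2 * pi <= v k.
Proof.
move=> k0; apply: lb_le_inf; first exact: Vset_ne.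
by move=> _ [C _ <-]; apply: le_trans (maxvis_ge C 1%g); exact: vis_ge2pi.
Qed.

Lemma v_approx k : (0 < k)%N -> exists C : 'I_k -> Pt, injective C /\ maxvis C <= 2 * v k.
Proof.
move=> k0; have vp : 0 < v k.
  by apply: lt_le_trans (v_ge2pi k0); apply: mulr_gt0 => //; exact: pi_gt0.
have [_ [C iC <-] h] := inf_adherent vp (conj (Vset_ne k) (Vset_lb k)).
by exists C; split => //; rewrite /v in h *; lra.
Qed.

Lemma far_x (p q : Pt) t : in_udisk p (circ_pt q t) -> `|q.1 - p.1| <= 2.
Proof.
rewrite /in_udisk /circ_pt /= => h.
have c1 := cos_le1 t; have c2 := cos_geN1 t.
have s0 : 0 <= (q.2 + sin t - p.2) ^+ 2 by exact: sqr_ge0.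
rewrite ler_norml; apply/andP; split; nra.
Qed.

Lemma far_y (p q : Pt) t : in_udisk p (circ_pt q t) -> `|q.2 - p.2| <= 2.
Proof.
rewrite /in_udisk /circ_pt /= => h.
have c1 := sin_le1 t; have c2 := sin_geN1 t.
have s0 : 0 <= (q.1 + cos t - p.1) ^+ 2 by exact: sqr_ge0.
rewrite ler_norml; apply/andP; split; nra.
Qed.

Lemma in_udisk_x (p x : Pt) : in_udisk p x -> `|x.1 - p.1| <= 1.
Proof.
rewrite /in_udisk => h.
have s0 : 0 <= (x.2 - p.2) ^+ 2 by exact: sqr_ge0.
rewrite ler_norml; apply/andP; split; nra.
Qed.

Definition shiftx (d : Reals_R) (p : Pt) : Pt := (p.1 + d, p.2).

Lemma in_udisk_shift d p q t :
  in_udisk (shiftx d p) (circ_pt (shiftx d q) t) <-> in_udisk p (circ_pt q t).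
Proof.
rewrite /in_udisk /circ_pt /shiftx /=.
have -> : q.1 + d + cos t - (p.1 + d) = q.1 + cos t - p.1 by ring.
by [].
Qed.

Section Glue.
Variables (k : nat) (kp : (0 < k)%N) (C' : 'I_k -> Pt).
Hypothesis iC : injective C'.

Definition Mb := \sum_l (`|(C' l).1| + `|(C' l).2|).
Lemma Mb_x l : `|(C' l).1| <= Mb.
Proof.
rewrite /Mb (bigD1 l) //= -addrA lerDl addr_ge0 //.
by apply: sumr_ge0 => i _; exact: addr_ge0.
Qed.
Lemma Mb_y l : `|(C' l).2| <= Mb.
Proof.
rewrite /Mb (bigD1 l) //= [`|(C' l).1| + _]addrC -addrA lerDl addr_ge0 //.
by apply: sumr_ge0 => i _; exact: addr_ge0.
Qed.
Definition Lb := 2 * Mb + 5.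

Variable N : nat.
Definition pos (i : 'I_N) : 'I_k := Ordinal (ltn_pmod i kp).
Definition gC (i : 'I_N) : Pt := shiftx (Lb * (i %/ k)%N%:R) (C' (pos i)).

Lemma gC_far (i j : 'I_N) : (i %/ k != j %/ k)%N -> 2 < `|(gC i).1 - (gC j).1|.
Proof.
move=> ne; rewrite /gC /shiftx /= /Lb.
have := Mb_x (pos i); have := Mb_x (pos j); rewrite !ler_norml => /andP[h1 h2] /andP[h3 h4].
have M0 : 0 <= Mb by apply: le_trans (Mb_x (pos i)).
rewrite ltr_normr; apply/orP.
case: (ltngtP (i %/ k) (j %/ k)) ne => // h _.
  right; have : ((i %/ k).+1)%:R <= (j %/ k)%:R :> Reals_R by rewrite ler_nat.
  rewrite -addn1 natrD => h5; nra.
left; have : ((j %/ k).+1)%:R <= (i %/ k)%:R :> Reals_R by rewrite ler_nat.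
rewrite -addn1 natrD => h5; nra.
Qed.

Lemma same_grp (i j : 'I_N) : (i %/ k = j %/ k)%N -> pos i = pos j -> i = j.
Proof.
move=> e1 /(congr1 val) /= e2; apply: val_inj => /=.
by rewrite (divn_eq i k) (divn_eq j k) e1 e2.
Qed.

Lemma gC_inj : injective gC.
Proof.
move=> i j e.
have e1 : (i %/ k = j %/ k)%N.
  case: (eqVneq (i %/ k)%N (j %/ k)%N) => // /gC_far.
  by rewrite e subrr normr0 => h; exfalso; clear e; lra.
apply: same_grp => //; apply: iC.
move: e; rewrite /gC /shiftx e1 => -[e2 e3].
have e4 : (C' (pos i)).1 = (C' (pos j)).1 by lra.
by move: e4 e3; case: (C' (pos i)); case: (C' (pos j)) => /= ? ? ? ? -> ->.
Qed.

Lemma gC_depth : depth_le gC k.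
Proof.
move=> x; rewrite -[k]card_ord; apply: (@leq_card_in _ _ pos).
move=> i j; rewrite !inE => /asboolP hi /asboolP hj e.
apply: same_grp e; case: (eqVneq (i %/ k)%N (j %/ k)%N) => // /gC_far.
apply: contraTeq => _; rewrite -leNgt.
have := in_udisk_x hi; have := in_udisk_x hj; rewrite !ler_norml.
move=> /andP[h1 h2] /andP[h3 h4]; apply/andP; split; clear hi hj; lra.
Qed.

Section Vis.
Variable f : {perm 'I_N}.
Let q := (N %/ k).+1.
Lemma grO_lt (i : 'I_N) : (i %/ k < q)%N.
Proof. by rewrite ltnS leq_div2r // ltnW. Qed.
Definition grO (i : 'I_N) : 'I_q := Ordinal (grO_lt i).

Definition keyA (a : 'I_q) (l : 'I_k) : nat :=
  if [pick i : 'I_N | (grO i == a) && (pos i == l)] is Some i then f i else (N + l)%N.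

Lemma keyA_i (i : 'I_N) : keyA (grO i) (pos i) = f i.
Proof.
rewrite /keyA; case: pickP => [j /andP[/eqP e1 /eqP e2]|/(_ i)]; last by rewrite !eqxx.
by rewrite (same_grp (congr1 val e1) e2).
Qed.

Lemma keyA_inj a : injective (keyA a).
Proof.
move=> l l'; rewrite /keyA.
case: pickP => [i /andP[/eqP e1 /eqP e2]|_]; case: pickP => [j /andP[/eqP e3 /eqP e4]|_].
- by move/val_inj/perm_inj => ij; rewrite -e2 -e4 ij.
- by move=> e; have := ltn_ord (f i); rewrite e ltnNge leq_addr.
- by move=> e; have := ltn_ord (f j); rewrite -e ltnNge leq_addr.
- by move/eqP; rewrite eqn_add2l => /eqP /val_inj.
Qed.

Definition gA (a : 'I_q) : {perm 'I_k} := proj1_sig (cid (rank_perm (@keyA_inj a))).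
Lemma gAP a l l' : (gA a l' < gA a l)%N = (keyA a l' < keyA a l)%N.
Proof. exact: (proj2_sig (cid (rank_perm (@keyA_inj a)))). Qed.

Lemma va_incl (i : 'I_N) :
  (visible_angles gC f i `<=` visible_angles C' (gA (grO i)) (pos i))%classic.
Proof.
move=> t [It H]; split => // l' lt.
have : (keyA (grO i) l' < f i)%N by rewrite -keyA_i -gAP.
rewrite /keyA; case: pickP => [j /andP[/eqP e1 /eqP e2]|_]; last first.
  by move=> h; have := ltn_ord (f i); rewrite ltnNge (leq_trans _ (ltnW h)) // leq_addr.
move=> /H; rewrite /gC -e2.
have -> : (j %/ k)%N = (i %/ k)%N by move: e1 => /(congr1 val).
by move=> h /in_udisk_shift.
Qed.

Lemma gC_vis : vis gC f <= q%:R * maxvis C'.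
Proof.
pose h (p : 'I_q * 'I_k) := mu (visible_angles C' (gA p.1) p.2).
pose phi (i : 'I_N) := (grO i, pos i).
have phi_inj : injective phi.
  by move=> i j [e1 e2]; apply: same_grp => //; apply: val_inj.
apply: (@le_trans _ _ (\sum_i h (phi i))).
  apply: ler_sum => i _; apply: mu_mono; first exact: va_incl.
  exact: va_sub.
rewrite -(big_imset _ (in2W phi_inj)) /=.
apply: (@le_trans _ _ (\sum_p h p)).
  rewrite [X in _ <= X](bigID (fun p => p \in [set phi x | x in 'I_N]%SET)) /= lerDl.
  by apply: sumr_ge0 => p _; exact: mu_ge0.
rewrite -(pair_big xpredT xpredT (fun a l => mu (visible_angles C' (gA a) l))) /=.
apply: (@le_trans _ _ (\sum_(a < q) maxvis C')).
  by apply: ler_sum => a _; exact: maxvis_ge.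
by rewrite sumr_const card_ord mulr_natl.
Qed.
End Vis.
End Glue.

Lemma part2 : exists K : Reals_R, 0 < K /\
     forall (c m : nat), (0 < c)%N -> (0 < m)%N ->
     exists C : 'I_(m * c) -> Pt, injective C /\ depth_le C c /\
       forall f : {perm 'I_(m * c)}, vis C f <= K * v c * (m * c)%:R / c%:R.
Proof.
exists 4; split => // c m cp mp.
have [C0 [iC0 hC0]] := v_approx cp.
exists (@gC c cp C0 (m * c)%N); split; first exact: gC_inj.
split; first exact: gC_depth.
move=> f; apply: le_trans (gC_vis cp C0 f) _.
rewrite mulnK // natrM.
have c0 : (c%:R : Reals_R) != 0 by rewrite pnatr_eq0 -lt0n.
have -> : 4 * v c * (m%:R * c%:R) / c%:R = 4 * v c * m%:R by field.
have v0 : 0 <= v c by apply: le_trans (v_ge2pi cp); apply: mulr_ge0 => //; exact: pi_ge0.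
have m1 : 1 <= (m%:R : Reals_R) by rewrite ler1n.
have M0 : 0 <= maxvis C0 by apply: le_trans (maxvis_ge C0 1%g); exact: vis_ge0.
rewrite -addn1 natrD; nra.
Qed.

Lemma floor_sep (u w : Reals_R) :
  Num.floor (2 * u) != Num.floor (2 * w) ->
  `|(Num.floor (2 * u) %% 5)%Z|%N = `|(Num.floor (2 * w) %% 5)%Z|%N ->
  2 < `|u - w|.
Proof.
set a := Num.floor (2 * u); set b := Num.floor (2 * w) => ne H.
have e : (a %% 5 = b %% 5)%Z.
  have := congr1 Posz H; rewrite !abszE !ger0_norm //; exact: modz_ge0.
pose d : int := ((a %/ 5)%Z - (b %/ 5)%Z).
have ad : a - b = d * 5 by rewrite {1}(divz_eq a 5) {1}(divz_eq b 5) e /d; ring.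
have d0 : d != 0.
  by apply: contra ne => /eqP d0; rewrite -subr_eq0 ad d0 mul0r.
have hd : (1 <= d) || (d <= -1).
  case: (ltgtP d 0) => h.
  - by rewrite -ltzD1 addNr h orbT.
  - by rewrite -gtz0_ge1 h.
  - by rewrite h eqxx in d0.
have adR : (a%:~R - b%:~R : Reals_R) = d%:~R * 5.
  by have := congr1 (fun z : int => (z%:~R : Reals_R)) ad; rewrite /= intrB intrM.
have [ha1 ha2] : (a%:~R <= 2 * u) /\ (2 * u < a%:~R + 1).
  by have /andP[] := mem_rg1_floor (2 * u).
have [hb1 hb2] : (b%:~R <= 2 * w) /\ (2 * w < b%:~R + 1).
  by have /andP[] := mem_rg1_floor (2 * w).
rewrite ltr_normr; apply/orP; case/orP: hd => hd.
  left; have : (1 : Reals_R) <= d%:~R by rewrite ler1z.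
  move=> h; lra.
right; have : (d%:~R : Reals_R) <= -1 by rewrite -(intrN _ 1) ler_int.
move=> h; lra.
Qed.

Lemma maxvis_ge0 n (C : 'I_n -> Pt) : 0 <= maxvis C.
Proof. by apply: le_trans (maxvis_ge C 1%g); exact: vis_ge0. Qed.

Lemma v_sub k c (C' : 'I_k -> Pt) : (0 < k)%N -> injective C' ->
  v c <= (c %/ k).+1%:R * maxvis C'.
Proof.
move=> kp iC; apply: (le_trans (v_le (@gC_inj k kp C' iC c))).
have [f hf] := maxvis_attained (@gC k kp C' c).
exact: le_trans hf (gC_vis kp C' f).
Qed.

Lemma v_sub2 k c (C' : 'I_k -> Pt) : (0 < k)%N -> (k <= c)%N -> injective C' ->
  v c * k%:R <= 2 * c%:R * maxvis C'.
Proof.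
move=> kp kc iC; have h := v_sub c kp iC.
have hk : ((c %/ k).+1 * k <= 2 * c)%N.
  have := leq_trunc_div c k; rewrite mulSn; lia.
have hkR : (c %/ k).+1%:R * k%:R <= 2 * c%:R :> Reals_R.
  by rewrite -natrM -(natrM _ 2 c) ler_nat.
have M0 := maxvis_ge0 C'.
have k0 : 0 <= k%:R :> Reals_R by [].
nra.
Qed.

Section P1.
Variables (n c : nat) (C : 'I_n -> Pt).
Hypotheses (iC : injective C) (dC : depth_le C c) (cp : (0 < c)%N).

Definition cx i := Num.floor (2 * (C i).1).
Definition cy i := Num.floor (2 * (C i).2).
Definition cell i : int * int := (cx i, cy i).
Definition colf (z : int * int) : 'I_5 * 'I_5 :=
  (inord `|(z.1 %% 5)%Z|, inord `|(z.2 %% 5)%Z|).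
Definition col i := colf (cell i).

Lemma m5 (z : int) : (`|(z %% 5)%Z| < 5)%N.
Proof. by rewrite -ltz_nat abszE ger0_norm ?modz_ge0 // ltz_pmod. Qed.

Lemma col_far i j t : col i = col j -> cell i != cell j -> ~ in_udisk (C j) (circ_pt (C i) t).
Proof.
move=> ec ne hin; have hx := far_x hin; have hy := far_y hin.
move: ec; rewrite /col /colf => -[e1' e2'].
have e1 := congr1 (@nat_of_ord 5) e1'; have e2 := congr1 (@nat_of_ord 5) e2'.
rewrite !inordK ?m5 // in e1 e2.
move: ne; rewrite /cell xpair_eqE negb_and => /orP[] ne.
  by have := floor_sep ne e1; rewrite ltNge hx.
by have := floor_sep ne e2; rewrite ltNge hy.
Qed.

Definition Pc (z : int * int) : Pt := ((z.1%:~R + 1/2) / 2, (z.2%:~R + 1/2) / 2).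

Lemma in_Pc i : in_udisk (C i) (Pc (cell i)).
Proof.
rewrite /in_udisk /Pc /cell /cx /cy /=.
have /andP[a1 a2] := mem_rg1_floor (2 * (C i).1).
have /andP[b1 b2] := mem_rg1_floor (2 * (C i).2).
set a := (Num.floor _)%:~R in a1 a2 *; set b := (Num.floor _)%:~R in b1 b2 *.
set x := (C i).1 in a1 a2 *; set y := (C i).2 in b1 b2 *.
have h1 : ((a + 1/2)/2 - x) ^+ 2 <= 1/16 by nra.
have h2 : ((b + 1/2)/2 - y) ^+ 2 <= 1/16 by nra.
lra.
Qed.

Definition rep i := odflt i [pick j | cell j == cell i].
Lemma rep_cell i : cell (rep i) = cell i.
Proof. by rewrite /rep; case: pickP => [j /eqP //|/(_ i)]; rewrite eqxx. Qed.
Lemma rep_eq i j : cell i = cell j -> rep i = rep j.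
Proof. by move=> e; rewrite /rep e; case: pickP => [//|/(_ j)]; rewrite eqxx. Qed.
Lemma rep_rep i : rep (rep i) = rep i.
Proof. exact/rep_eq/rep_cell. Qed.

Definition S r : {set 'I_n} := [set j | cell j == cell r]%SET.
Lemma rin r : r \in S r. Proof. by rewrite inE. Qed.
Lemma in_S_rep i : i \in S (rep i). Proof. by rewrite inE rep_cell. Qed.
Lemma card_S r : (#|S r| <= c)%N.
Proof.
apply: leq_trans (dC (Pc (cell r))); apply: subset_leq_card.
apply/fsubsetP => j; rewrite !inE => /eqP e; apply/asboolP; rewrite -e; exact: in_Pc.
Qed.

Definition Cr r : 'I_#|S r| -> Pt := fun l => C (enum_val l).
Arguments Cr : clear implicits.
Lemma Cr_inj r : injective (Cr r).
Proof. by move=> a b /iC /enum_val_inj. Qed.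
Definition G r : {perm 'I_#|S r|} := proj1_sig (cid (maxvis_attained (Cr r))).
Lemma G_spec r : maxvis (Cr r) <= vis (Cr r) (G r).
Proof. exact: (proj2_sig (cid (maxvis_attained (Cr r)))). Qed.
Definition lidx r i : 'I_#|S r| := enum_rank_in (rin r) i.
Definition lk r i : nat := G r (lidx r i).
Lemma lk_lt r i : (lk r i < n)%N.
Proof.
apply: leq_trans (ltn_ord _) _; rewrite -[X in (_ <= X)%N]card_ord; exact: max_card.
Qed.
Lemma Cr_lidx r i : i \in S r -> Cr r (lidx r i) = C i.
Proof. by move=> h; rewrite /Cr /lidx enum_rankK_in. Qed.

Variable p : 'I_5 * 'I_5.
Definition key i : nat :=
  if col i == p then (rep i * n + lk (rep i) i)%N else (n * n + i)%N.

Lemma key_in_lt i : col i == p -> (key i < n * n)%N.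
Proof. by move=> ci; rewrite /key ci; have := lk_lt (rep i) i; have := ltn_ord (rep i); nia. Qed.

Lemma key_inj : injective key.
Proof.
move=> i j e.
have n0 : (0 < n)%N by apply: leq_ltn_trans (ltn_ord i).
case ci: (col i == p); case cj: (col j == p).
- move: e; rewrite /key ci cj => e.
  have er : rep i = rep j.
    apply: val_inj; have := congr1 (fun x => x %/ n)%N e.
    by rewrite /= !divnMDl // !divn_small ?lk_lt // !addn0.
  move: e; rewrite er => /addnI /val_inj /perm_inj.
  rewrite /lidx; apply: enum_rank_in_inj; first by rewrite -er in_S_rep.
  exact: in_S_rep.
- have := key_in_lt ci; rewrite e /key cj => h; exfalso; move: h; rewrite ltnNge; by rewrite leq_addr.
- have := key_in_lt cj; rewrite -e /key ci => h; exfalso; move: h; rewrite ltnNge; by rewrite leq_addr.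
- by move: e; rewrite /key ci cj => /addnI /val_inj.
Qed.

Definition F : {perm 'I_n} := proj1_sig (cid (rank_perm key_inj)).
Lemma F_spec i j : (F j < F i)%N = (key j < key i)%N.
Proof. exact: (proj2_sig (cid (rank_perm key_inj))). Qed.

Definition w i := mu (visible_angles (Cr (rep i)) (G (rep i)) (lidx (rep i) i)).

Lemma incl i : col i == p ->
  (visible_angles (Cr (rep i)) (G (rep i)) (lidx (rep i) i) `<=` visible_angles C F i)%classic.
Proof.
move=> ci t [It H]; split => // j lt.
have kl : (key j < key i)%N by rewrite -F_spec.
case cj: (col j == p); last first.
  exfalso; move: kl; rewrite {1}/key cj ltnNge; move/negP; apply.
  exact: leq_trans (ltnW (key_in_lt ci)) (leq_addr _ _).
case: (eqVneq (cell i) (cell j)) => ce; last first.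
  by apply: col_far ce; rewrite (eqP ci) (eqP cj).
have er : rep j = rep i by apply: rep_eq.
move: kl; rewrite /key ci cj er ltn_add2l => kl.
have := H (lidx (rep i) j) kl.
rewrite !Cr_lidx //; first exact: in_S_rep.
by rewrite inE -ce rep_cell.
Qed.

Definition Cl : {set 'I_n} := [set i | col i == p]%SET.

Lemma visF : \sum_(i in Cl) w i <= vis C F.
Proof.
rewrite /vis [X in _ <= X](bigID (fun i => i \in Cl)) /= -[X in X <= _]addr0; apply: lerD.
  apply: ler_sum => i; rewrite inE => ci; apply: mu_mono; first exact: incl.
  exact: va_sub.
by apply: sumr_ge0 => i _; exact: mu_ge0.
Qed.

Lemma cluster r :
  \sum_(i in Cl | rep i == r) (v c / (2 * c%:R)) <= \sum_(i in Cl | rep i == r) w i.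
Proof.
case: (pickP (fun i => (i \in Cl) && (rep i == r))) => [i0 /andP[ci0 /eqP ri0] | none]; last first.
  by rewrite !big_pred0.
have Heq : forall i, ((i \in Cl) && (rep i == r)) = (i \in S r).
  move=> i; rewrite !inE -ri0 rep_cell; apply/idP/idP.
    by case/andP=> _ /eqP e; rewrite -(rep_cell i) e rep_cell.
  move=> /eqP e; rewrite (rep_eq e) eqxx andbT /col e.
  by move: ci0; rewrite inE.
rewrite (eq_bigl _ _ Heq) [X in _ <= X](eq_bigl _ _ Heq).
have rr : rep r = r by rewrite -ri0 rep_rep.
rewrite [X in _ <= X](eq_bigr (fun i => mu (visible_angles (Cr r) (G r) (lidx r i)))); last first.
  move=> i iS; rewrite /w; have -> // : rep i = r.
  by rewrite -rr; apply: rep_eq; move: iS; rewrite inE => /eqP.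
rewrite -(big_enum_rank (rin r) (fun l => mu (visible_angles (Cr r) (G r) l))) /=.
rewrite sumr_const.
have k0 : (0 < #|S r|)%N by apply/card_gt0P; exists r; exact: rin.
have h := v_sub2 k0 (card_S r) (@Cr_inj r).
have hG := G_spec r.
have c0 : 0 < c%:R :> Reals_R by rewrite ltr0n.
have M0 := maxvis_ge0 (Cr r).
change (v c / (2 * c%:R) *+ #|S r| <= vis (Cr r) (G r)).
rewrite -mulr_natr.
set y := v c / (2 * c%:R).
have ey : y * (2 * c%:R) = v c by rewrite /y mulrVK // unitfE mulf_neq0 // lt0r_neq0.
set K := (#|S r|)%:R in h *.
apply: le_trans hG.
rewrite -(ler_pM2r (_ : 0 < 2 * c%:R)); last by rewrite mulr_gt0.
have -> : y * K * (2 * c%:R) = v c * K by rewrite -ey; ring.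
by rewrite [maxvis _ * _]mulrC.
Qed.

Lemma part1_p : (v c / (2 * c%:R)) *+ #|Cl| <= vis C F.
Proof.
apply: le_trans visF; rewrite -sumr_const.
rewrite (partition_big rep xpredT) // [X in _ <= X](partition_big rep xpredT) //=.
by apply: ler_sum => r _; exact: cluster.
Qed.
End P1.

Lemma part1 : exists kappa : Reals_R, 0 < kappa /\
     forall (c n : nat), (0 < c)%N -> (0 < n)%N ->
     forall C : 'I_n -> Pt, injective C -> depth_le C c ->
     exists f : {perm 'I_n}, kappa * v c * n%:R / c%:R <= vis C f.
Proof.
exists (1/50); split => // c n cp np C iC dC.
pose m := (\max_(q : 'I_5 * 'I_5) #|Cl C q|)%N.
have [p hp] : exists p, m = #|Cl C p|.
  by exists [arg max_(i > (ord0, ord0)) #|Cl C i|]%N; exact: bigop.bigmax_eq_arg.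
have hn : n = (\sum_(q : 'I_5 * 'I_5) #|Cl C q|)%N.
  rewrite -{1}[n]card_ord -bigop.sum1_card (partition_big (@col n C) xpredT) //=.
  apply: eq_bigr => q _; rewrite -bigop.sum1_card; apply: eq_bigl => i.
  by rewrite inE.
have hn2 : (n <= 25 * #|Cl C p|)%N.
  rewrite {1}hn -hp.
  have : (\sum_(q : 'I_5 * 'I_5) #|Cl C q| <= \sum_(q : 'I_5 * 'I_5) m)%N.
    by apply: leq_sum => q _; exact: (bigop.leq_bigmax q).
  by rewrite bigop.sum_nat_const card_prod card_ord.
exists (F C cp p); have h := part1_p iC dC cp p.
rewrite -mulr_natr in h.
set y := v c / (2 * c%:R) in h.
have c0 : (c%:R : Reals_R) != 0 by rewrite pnatr_eq0 -lt0n.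
have -> : 1 / 50 * v c * n%:R / c%:R = y * n%:R / 25 by rewrite /y; field.
have y0 : 0 <= y.
  have v0 : 0 <= v c.
    by apply: le_trans (v_ge2pi cp); apply: mulr_ge0 => //; exact: pi_ge0.
  by rewrite /y divr_ge0 // mulr_ge0.
have : (n%:R : Reals_R) <= 25 * #|Cl C p|%:R by rewrite -(natrM _ 25) ler_nat.
move=> hnR; apply: le_trans h; nra.
Qed.

Theorem theorem6 :
  (exists kappa : Reals_R, 0 < kappa /\
     forall (c n : nat), (0 < c)%N -> (0 < n)%N ->
     forall C : 'I_n -> Pt, injective C -> depth_le C c ->
     exists f : {perm 'I_n}, kappa * v c * n%:R / c%:R <= vis C f)
  /\
  (exists K : Reals_R, 0 < K /\
     forall (c m : nat), (0 < c)%N -> (0 < m)%N ->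
     exists C : 'I_(m * c) -> Pt, injective C /\ depth_le C c /\
       forall f : {perm 'I_(m * c)}, vis C f <= K * v c * (m * c)%:R / c%:R).
Proof. split; [exact: part1 | exact: part2]. Qed.
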